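(* Let $d\in\mathbf{N}$, let $A$ be a symmetric $(d+1)\times(d+1)$ matrix with rational entries, let $\Delta_d=\{x\in\mathbf{R}^{d+1}: \sum_{i=1}^{d+1}x_i=1,\ x_i\ge0\ \forall i\}$ with relative interior $\Delta_d^o=\{x\in\Delta_d: x_i>0\ \forall i\}$, and define $f:\Delta_d\to\mathbf{R}$ by $f(x)=\frac12x^TAx$. (a) $f$ attains its maximum and its minimum on $\Delta_d$ at points whose entries are all rational. (b) If there is $x\in\Delta_d^o$ with $f(x)=M:=\max_{\Delta_d}f$, then there is $x'\in\Delta_d^o$ with all entries rational and $f(x')=M$. The same holds with the maximum replaced by the minimum. *)

(* Defs.v *)
From HB Require Import structures.
From mathcomp Require Import all_boot all_order all_algebra.
From mathcomp Require Import reals.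
Set Implicit Arguments. Unset Strict Implicit. Unset Printing Implicit Defensive.
Import Order.TTheory GRing.Theory Num.Theory.
Local Open Scope ring_scope.

Definition in_simplex (R : realType) (d : nat) (x : 'rV[R]_(d.+1)) : Prop :=
  (\sum_(i < d.+1) x 0 i = 1) /\ (forall i, 0 <= x 0 i).

Definition in_simplex_int (R : realType) (d : nat) (x : 'rV[R]_(d.+1)) : Prop :=
  (\sum_(i < d.+1) x 0 i = 1) /\ (forall i, 0 < x 0 i).

Definition qf (R : realType) (d : nat) (A : 'M[rat]_(d.+1)) (x : 'rV[R]_(d.+1)) : R :=
  2^-1 * (x *m map_mx (@ratr R) A *m x^T) 0 0.

Definition ratpt (R : realType) (d : nat) (q : 'rV[rat]_(d.+1)) : 'rV[R]_(d.+1) :=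
  map_mx (@ratr R) q.

(* Main.v *)
Require Import Defs.
From HB Require Import structures.
From mathcomp Require Import all_boot all_order all_algebra.
From mathcomp Require Import reals ring lra.
From Stdlib Require Import Classical.
Import Order.TTheory GRing.Theory Num.Theory.
Local Open Scope ring_scope.
Set Implicit Arguments. Unset Strict Implicit. Unset Printing Implicit Defensive.

Section Main.
Variables (R : realType) (d : nat) (A : 'M[rat]_(d.+1)).
Hypothesis hA : A^T = A.
Local Notation n := d.+1.
Local Notation vec := 'rV[R]_n.

Definition B : 'M[R]_n := map_mx (@ratr R) A.
Lemma BT : B^T = B.
Proof. by rewrite /B map_trmx hA. Qed.

Definition bf (x y : vec) : R := (x *m B *m y^T) 0 0.
Definition Q (x : vec) : R := bf x x.

Lemma qfE x : qf A x = 2^-1 * Q x.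
Proof. by []. Qed.

Lemma bfE x y : bf x y = \sum_r (x *m B) 0 r * y 0 r.
Proof. rewrite /bf [LHS]mxE; apply: eq_bigr => r _; by rewrite [y^T _ _]mxE. Qed.

Lemma bfC x y : bf x y = bf y x.
Proof.
have h (M : 'M[R]_1) : M 0 0 = M^T 0 0 by rewrite mxE.
by rewrite /bf h !trmx_mul trmxK BT mulmxA.
Qed.

Lemma e00D (M N : 'M[R]_1) : (M + N) 0 0 = M 0 0 + N 0 0.
Proof. by rewrite mxE. Qed.
Lemma e00Z a (M : 'M[R]_1) : (a *: M) 0 0 = a * M 0 0.
Proof. by rewrite mxE. Qed.

Lemma Q_exp x u s : Q (x + s *: u) = Q x + 2 * s * bf x u + s ^+ 2 * Q u.
Proof.
rewrite /Q /bf linearD linearZ /= !mulmxDl !mulmxDr -!scalemxAl -!scalemxAr.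
rewrite !e00D !e00Z.
have := bfC u x; rewrite /bf => ->.
lra.
Qed.

Definition supp (y : vec) : {set 'I_n} := [set j | 0 < y 0 j].

Lemma sum_exp (x u : vec) s : \sum_j (x + s *: u) 0 j = \sum_j x 0 j + s * \sum_j u 0 j.
Proof. rewrite mulr_sumr -big_split /=; apply: eq_bigr => j _; by rewrite !mxE. Qed.

Lemma neg_coord (w : vec) : w != 0 -> \sum_j w 0 j = 0 -> exists j, w 0 j < 0.
Proof.
move=> wn0 ws.
have [j Hj|H] := pickP (fun j => w 0 j < 0); first by exists j.
case/negP: wn0; apply/eqP/rowP => j; rewrite mxE.
apply: (psumr_eq0P (P := predT) _ ws) => // i _.
by rewrite leNgt H.
Qed.


Lemma bdry (y w : vec) : in_simplex y -> \sum_j w 0 j = 0 ->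
  (forall j, j \notin supp y -> w 0 j = 0) -> (exists j, w 0 j < 0) ->
  exists t : R, [/\ 0 < t, (forall s : R, 0 <= s -> s <= t -> in_simplex (y + s *: w)),
     (forall j, w 0 j < 0 -> t * - w 0 j <= y 0 j) & (#|supp (y + t *: w)| < #|supp y|)%N].
Proof.
move=> [ys yp] ws woff [j0 hj0].
case: (arg_minP (P := fun j => w 0 j < 0) (fun j => y 0 j / - w 0 j) hj0) => jm hjm hmin.
have yjm : 0 < y 0 jm.
  have : jm \in supp y by apply/negPn/negP => /woff h; rewrite h ltxx in hjm.
  by rewrite inE.
set t := y 0 jm / - w 0 jm.
have tpos : 0 < t by apply: divr_gt0 => //; rewrite oppr_gt0.
have tle j : w 0 j < 0 -> t * - w 0 j <= y 0 j.
  by move=> hj; have := hmin j hj; rewrite -/t ler_pdivlMr // oppr_gt0.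
exists t; split => //.
- move=> s s0 st; split; first by rewrite sum_exp ys ws mulr0 addr0.
  move=> j; rewrite !mxE; case: (ltP (w 0 j) 0) => hj.
    have h1 := tle j hj.
    have h2 : s * - w 0 j <= t * - w 0 j by apply: ler_wpM2r => //; lra.
    rewrite !mulrN in h1 h2; lra.
  have := yp j; have := mulr_ge0 s0 hj; lra.
- apply: proper_card; apply/properP; split.
    apply/subsetP => j; rewrite !inE !mxE => hj; apply/negPn/negP => hn.
    have hw : w 0 j = 0 by apply: woff; rewrite inE.
    have := yp j; move: hj hn; rewrite hw mulr0 addr0 => hj hn; by rewrite hj in hn.
  exists jm; rewrite !inE ?mxE // -leNgt.
  have -> : y 0 jm + t * w 0 jm = 0.
    rewrite /t invrN mulrN mulNr mulfVK ?subrr //; by rewrite lt_eqF.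
  by [].
Qed.


Definition Nmx (F : fieldType) (M : 'M[F]_n) (S : {set 'I_n}) (k : 'I_n) : 'M[F]_n :=
  \matrix_(r, c) (if c == k then 1 else if c \in S then M r c - M r k
                  else (1%:M : 'M[F]_n) r c).
Definition bvec (F : fieldType) (k : 'I_n) : 'rV[F]_n := \row_c (c == k)%:R.

Lemma map_Nmx S k : map_mx (@ratr R) (Nmx A S k) = Nmx B S k.
Proof.
apply/matrixP => r c; rewrite !mxE.
case: (c == k) => /=; first exact: rmorph1.
case: (c \in S) => /=; first by rewrite rmorphB ?/B ?mxE.
by rewrite ?mxE rmorphMn rmorph1.
Qed.

Lemma map_bvec k : map_mx (@ratr R) (bvec rat k) = bvec R k.
Proof. by apply/rowP => c; rewrite !mxE rmorph_nat. Qed.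

Lemma NmxE (x : vec) (S : {set 'I_n}) (k : 'I_n) r : (x *m Nmx B S k) 0 r =
  if r == k then \sum_j x 0 j else if r \in S then (x *m B) 0 r - (x *m B) 0 k else x 0 r.
Proof.
rewrite [LHS]mxE; under eq_bigr do rewrite mxE.
case: (r == k) => /=; first by apply: eq_bigr => j _; rewrite mulr1.
case: (r \in S) => /=.
  by rewrite !mxE -sumrB; apply: eq_bigr => j _; rewrite mulrBr.
by rewrite -[in RHS](mulmx1 x) [RHS]mxE.
Qed.

Lemma crit_orth (x u : vec) (S : {set 'I_n}) (k : 'I_n) : (forall r, r \in S -> (x *m B) 0 r = (x *m B) 0 k) ->
  (forall r, r \notin S -> u 0 r = 0) -> \sum_j u 0 j = 0 -> bf x u = 0.
Proof.
move=> hx hu us; rewrite bfE.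
transitivity (\sum_r (x *m B) 0 k * u 0 r).
  apply: eq_bigr => r _; case: (boolP (r \in S)) => h; first by rewrite hx.
  by rewrite hu ?mulr0.
by rewrite -mulr_sumr us mulr0.
Qed.

Lemma Nsol (x : vec) (S : {set 'I_n}) (k : 'I_n) (b : vec) : k \in S -> x *m Nmx B S k = b ->
  [/\ \sum_j x 0 j = b 0 k, forall r, r \notin S -> x 0 r = b 0 r &
      forall r, r \in S -> r != k -> (x *m B) 0 r - (x *m B) 0 k = b 0 r].
Proof.
move=> kS h; split.
- by have := NmxE x S k k; rewrite eqxx h => ->.
- move=> r rS; have rk : r != k by apply: contraNneq rS => ->.
  by have := NmxE x S k r; rewrite h (negbTE rk) (negbTE rS) => ->.
- move=> r rS rk.
  by have := NmxE x S k r; rewrite h (negbTE rk) rS => ->.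
Qed.

Definition Def (S : {set 'I_n}) := forall v : vec, (forall j, j \notin S -> v 0 j = 0) ->
  \sum_j v 0 j = 0 -> 0 <= Q v -> v = 0.

Lemma crit_of (x : vec) (S : {set 'I_n}) (k : 'I_n) (b : vec) : k \in S -> x *m Nmx B S k = b ->
  (forall r, r \in S -> r != k -> b 0 r = 0) ->
  forall r, r \in S -> (x *m B) 0 r = (x *m B) 0 k.
Proof.
move=> kS h hb r rS; have [-> //|rk] := eqVneq r k.
have [_ _ h3] := Nsol kS h; apply/eqP; rewrite -subr_eq0; apply/eqP.
by rewrite h3 // hb.
Qed.

Lemma Nunit (S : {set 'I_n}) (k : 'I_n) : k \in S -> Def S -> Nmx B S k \in unitmx.
Proof.
move=> kS hd; rewrite -row_free_unit -kermx_eq0; apply/eqP/row_matrixP => i.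
rewrite row0; set v := row i _.
have hv : v *m Nmx B S k = 0 by rewrite /v -row_mul mulmx_ker row0.
have [s1 s2 _] := Nsol kS hv.
have hc := crit_of kS hv (fun r _ _ => ltac:(by rewrite mxE)).
apply: hd.
- by move=> j hj; rewrite s2 // mxE.
- by rewrite s1 mxE.
- have -> : Q v = 0.
    apply: (crit_orth hc); first by move=> j hj; rewrite s2 // mxE.
    by rewrite s1 mxE.
  by [].
Qed.

Definition cq (S : {set 'I_n}) k : 'rV[rat]_n := bvec rat k *m invmx (Nmx A S k).

Lemma cq_sol (S : {set 'I_n}) (k : 'I_n) : k \in S -> Def S -> ratpt R (cq S k) *m Nmx B S k = bvec R k.
Proof.
move=> kS hd.
have hu : Nmx A S k \in unitmx by rewrite -(map_unitmx (@ratr R)) map_Nmx Nunit.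
by rewrite /ratpt -map_Nmx -map_mxM /cq mulmxKV // map_bvec.
Qed.


Lemma sumN (v : vec) : \sum_j (- v) 0 j = - \sum_j v 0 j.
Proof. by rewrite -sumrN; apply: eq_bigr => j _; rewrite mxE. Qed.

Lemma sumB (x v : vec) : \sum_j (x - v) 0 j = \sum_j x 0 j - \sum_j v 0 j.
Proof. by rewrite -sumrB; apply: eq_bigr => j _; rewrite !mxE. Qed.

Lemma entB (x v : vec) j : (x - v) 0 j = x 0 j - v 0 j.
Proof. by rewrite !mxE. Qed.

Lemma entDZ (x v : vec) s j : (x + s *: v) 0 j = x 0 j + s * v 0 j.
Proof. by rewrite !mxE. Qed.

Lemma two_sided (y v : vec) : in_simplex y -> (forall z, in_simplex z -> Q z <= Q y) ->
  v != 0 -> \sum_j v 0 j = 0 -> (forall j, j \notin supp y -> v 0 j = 0) ->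
  Q v <= 0 /\ (0 <= Q v -> bf y v = 0).
Proof.
move=> ys ymax vn0 vs voff.
have [t1 [t1p hs1 _ _]] := bdry ys vs voff (neg_coord vn0 vs).
have mvn0 : -v != 0 by rewrite oppr_eq0.
have mvs : \sum_j (-v) 0 j = 0 by rewrite sumN vs oppr0.
have mvoff : forall j, j \notin supp y -> (-v) 0 j = 0.
  by move=> j hj; rewrite mxE voff ?oppr0.
have [t2 [t2p hs2 _ _]] := bdry ys mvs mvoff (neg_coord mvn0 mvs).
have h1 := ymax _ (hs1 t1 (ltW t1p) (lexx _)).
have h2 := ymax _ (hs2 t2 (ltW t2p) (lexx _)).
rewrite Q_exp in h1; rewrite scalerN -scaleNr Q_exp sqrrN in h2.
set b := bf y v in h1 h2 *; set q := Q v in h1 h2 *.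
have e1 : t1 * (2 * b + t1 * q) <= 0 by lra.
have e2 : t2 * (- 2 * b + t2 * q) <= 0 by lra.
rewrite pmulr_rle0 // in e1; rewrite pmulr_rle0 // in e2.
split; first nra.
move=> q0; nra.
Qed.


Definition cpt (p : {set 'I_n} * 'I_n) : vec := ratpt R (cq p.1 p.2).

Lemma supp_n0 (y : vec) : in_simplex y -> exists k, k \in supp y.
Proof.
case=> s1 s2; apply: NNPP => h.
have : \sum_j y 0 j = 0.
  apply: big1 => j _; have := s2 j.
  have : j \notin supp y by apply/negP => hj; apply: h; exists j.
  rewrite inE -leNgt => h1 h2; apply/eqP; rewrite eq_le h1 h2.
  by [].
by rewrite s1 => /eqP; rewrite oner_eq0.
Qed.

Lemma Q0 : Q 0 = 0.
Proof. by rewrite /Q /bf !mul0mx mxE. Qed.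

Lemma QN v : Q (- v) = Q v.
Proof. by rewrite /Q /bf linearN /= mulmxN !mulNmx opprK. Qed.

Lemma bfN y v : bf y (- v) = - bf y v.
Proof. by rewrite /bf linearN /= mulmxN mxE. Qed.

Lemma descent (i : 'I_n) m : forall y : vec, (#|supp y| <= m)%N -> in_simplex y ->
  exists p, [/\ in_simplex (cpt p), Q y <= Q (cpt p) &
     ((forall z, in_simplex z -> Q z <= Q y) -> 0 < y 0 i -> 0 < cpt p 0 i)].
Proof.
elim: m => [|m IH] y hm ys.
  have [k kS] := supp_n0 ys.
  have : (0 < #|supp y|)%N by apply/card_gt0P; exists k.
  by rewrite lt0n; move: hm; rewrite leqn0 => ->.
have [k kS] := supp_n0 ys.
have yoff : forall j, j \notin supp y -> y 0 j = 0.
  move=> j; rewrite inE -leNgt => h; apply/eqP; rewrite eq_le h.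
  by case: ys => _ ->.
have ynn : forall j, 0 <= y 0 j by case: ys.
case: (classic (Def (supp y))) => hd.
-
  set S := supp y in kS yoff hd *.
  set c := cpt (S, k).
  have hc : c *m Nmx B S k = bvec R k := cq_sol kS hd.
  have [c1 c2 _] := Nsol kS hc.
  rewrite mxE eqxx in c1.
  have coff : forall r, r \notin S -> c 0 r = 0.
    move=> r rS; rewrite c2 // mxE.
    have -> : (r == k) = false by apply/negbTE; apply: contraNneq rS => ->.
    by [].
  have ccrit := crit_of kS hc (fun r _ rk => ltac:(by rewrite mxE (negbTE rk))).
  set w := c - y.
  have ws : \sum_j w 0 j = 0.
    by rewrite /w sumB c1 ys.1 subrr.
  have woff : forall j, j \notin S -> w 0 j = 0.
    by move=> j hj; rewrite /w entB coff // yoff // subrr.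
  have hQ : forall s, Q (y + s *: w) = Q c + (s - 1) ^+ 2 * Q w.
    move=> s; have -> : y + s *: w = c + (s - 1) *: w.
      apply/rowP => j; rewrite /w !mxE; ring.
    by rewrite Q_exp (crit_orth ccrit woff ws) mulr0 addr0.
  have Qw0 : Q w <= 0.
    case: (eqVneq w 0) => [->|wn]; first by rewrite Q0.
    rewrite leNgt; apply/negP => h; move/eqP: wn; apply; apply: hd => //; exact: ltW.
  have hy : Q y = Q c + Q w.
    by have := hQ 0; rewrite scale0r addr0 sub0r sqrrN expr1n mul1r.
  have maxeq : (forall z, in_simplex z -> Q z <= Q y) -> w = 0.
    move=> ymax; case: (eqVneq w 0) => // wn; exfalso.
    have Qwn : Q w < 0.
      by rewrite ltNge; apply/negP => h; move/eqP: wn; apply; exact: hd.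
    have [t [tp hs _ _]] := bdry ys ws woff (neg_coord wn ws).
    have [s [sp st sh]] : exists s : R, [/\ 0 < s, s <= t & s <= 2^-1].
      case: (leP t 2^-1) => h; [exists t | exists 2^-1]; split => //; lra.
    have := ymax _ (hs s (ltW sp) st); rewrite hQ hy => h.
    have h2 : (s - 1) ^+ 2 < 1 by nra.
    have h3 : 0 < (1 - (s - 1) ^+ 2) * (- Q w) by apply: mulr_gt0; lra.
    move: h; apply/negP; rewrite -ltNge; lra.
  case: (classic (in_simplex c)) => hcS.
    exists (S, k); split => //; first lra.
    move=> ymax yi; have w0 := maxeq ymax.
    have -> : cpt (S, k) = y by apply/eqP; rewrite -subr_eq0 -/c -/w w0.
    by [].
  have [j cj] : exists j, c 0 j < 0.
    apply: NNPP => h; apply: hcS; split => // j; rewrite leNgt; apply/negP => hj.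
    by apply: h; exists j.
  have wj : w 0 j < 0 by rewrite /w entB; have := ynn j; lra.
  have wn : w != 0 by apply/eqP => w0; move: wj; rewrite w0 mxE ltxx.
  have [t [tp hs tle hcard]] := bdry ys ws woff (neg_coord wn ws).
  have t1 : t < 1.
    have := tle j wj; rewrite /w entB; have := ynn j; nra.
  have y's := hs t (ltW tp) (lexx _).
  have hm' : (#|supp (y + t *: w)| <= m)%N by rewrite -ltnS; apply: leq_trans hcard hm.
  have [p [p1 p2 p3]] := IH _ hm' y's.
  exists p; split => //.
    apply: le_trans p2; rewrite hQ hy.
    have : (t - 1) ^+ 2 <= 1 by nra.
    nra.
  by move=> ymax; rewrite (maxeq ymax) eqxx in wn.
-
  have [v [voff vs vq vn]] : exists v : vec, [/\ (forall j, j \notin supp y -> v 0 j = 0),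
      \sum_j v 0 j = 0, 0 <= Q v & v != 0].
    apply: NNPP => h; apply: hd => v h1 h2 h3; apply/eqP; apply: NNPP => h4.
    by apply: h; exists v; split => //; apply/negP.
  have [w [wsum woff [wq wn wb wi]]] : exists w : vec, [/\ \sum_j w 0 j = 0,
      (forall j, j \notin supp y -> w 0 j = 0) &
      [/\ Q w = Q v, w != 0, 0 <= bf y w & (bf y v = 0 -> 0 <= w 0 i)]].
    have mv1 : \sum_j (-v) 0 j = 0 by rewrite sumN vs oppr0.
    have mv2 : forall j, j \notin supp y -> (-v) 0 j = 0.
      by move=> j hj; rewrite mxE voff ?oppr0.
    have mv3 : -v != 0 by rewrite oppr_eq0.
    case: (ltgtP (bf y v) 0) => hb.
    + exists (-v); split => //; split => //; rewrite ?QN ?bfN //; lra.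
    + by exists v; split => //; split => //; [lra | move=> h; lra].
    + case: (leP 0 (v 0 i)) => hvi.
        by exists v; split => //; split => //; rewrite hb.
      exists (-v); split => //; split => //; rewrite ?QN ?bfN ?hb ?oppr0 // mxE; lra.
  have [t [tp hs _ hcard]] := bdry ys wsum woff (neg_coord wn wsum).
  have y's := hs t (ltW tp) (lexx _).
  have hQ' : Q y <= Q (y + t *: w).
    rewrite Q_exp wq; have := mulr_ge0 (ltW tp) wb; have := sqr_ge0 t; nra.
  have hm' : (#|supp (y + t *: w)| <= m)%N by rewrite -ltnS; apply: leq_trans hcard hm.
  have [p [p1 p2 p3]] := IH _ hm' y's.
  exists p; split => //; first exact: le_trans p2.
  move=> ymax yi; apply: p3.
    by move=> z zs; apply: le_trans (ymax z zs) hQ'.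
  have [_ hb0] := two_sided ys ymax vn vs voff.
  have := wi (hb0 vq); rewrite !mxE => h; have := mulr_ge0 (ltW tp) h; lra.
Qed.


Definition insb (x : vec) : bool := (\sum_j x 0 j == 1) && [forall j, 0 <= x 0 j].
Lemma insbP x : reflect (in_simplex x) (insb x).
Proof.
apply: (iffP andP) => [[/eqP h1 /forallP h2]|[h1 h2]]; first by split.
by split; [apply/eqP | apply/forallP].
Qed.

Lemma vertex : in_simplex (bvec R ord0).
Proof.
split; last by move=> j; rewrite mxE ler0n.
under eq_bigr do rewrite mxE.
rewrite (bigD1 ord0) //= big1 ?addr0 // => j /negbTE ->.
by [].
Qed.

Lemma Qle_qf y z : (qf A y <= qf A z) = (Q y <= Q z).
Proof. by rewrite !qfE ler_pM2l // invr_gt0 ltr0n. Qed.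

Lemma partA : exists q, in_simplex (ratpt R q) /\
  forall y, in_simplex y -> qf A y <= qf A (ratpt R q).
Proof.
have [p0 [h0 _ _]] := descent ord0 (leqnn _) vertex.
case: (arg_maxP (P := fun p => insb (cpt p)) (fun p => Q (cpt p)) (introT (insbP _) h0)).
move=> pb hpb hmax.
exists (cq pb.1 pb.2); split; first exact/insbP.
move=> y ys; rewrite Qle_qf.
have [p [p1 p2 _]] := descent ord0 (leqnn _) ys.
exact: le_trans p2 (hmax p (introT (insbP _) p1)).
Qed.

Lemma ratpt_mid (q1 q2 : 'rV[rat]_n) :
  ratpt R (q1 + 2^-1 *: (q2 - q1)) = ratpt R q1 + 2^-1 *: (ratpt R q2 - ratpt R q1).
Proof.
apply/rowP => j; rewrite !mxE rmorphD rmorphM rmorphB fmorphV rmorph_nat.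
by [].
Qed.

Lemma partB : (exists x : vec, in_simplex_int x /\ forall y : vec, in_simplex y -> qf A y <= qf A x) ->
  exists q, in_simplex_int (ratpt R q) /\ forall y, in_simplex y -> qf A y <= qf A (ratpt R q).
Proof.
case=> x [[xs xp] xmax'].
have xmax : forall y, in_simplex y -> Q y <= Q x by move=> y ys; rewrite -Qle_qf; exact: xmax'.
have xS : in_simplex x by split => // j; exact: ltW.
have conc : forall u : vec, \sum_j u 0 j = 0 -> Q u <= 0.
  move=> u us; case: (eqVneq u 0) => [->|un]; first by rewrite Q0.
  have hoff : forall j, j \notin supp x -> u 0 j = 0.
    by move=> j; rewrite inE xp.
  by have [h _] := two_sided xS xmax un us hoff.
pose maxi (q : 'rV[rat]_n) := in_simplex (ratpt R q) /\
   forall y, in_simplex y -> Q y <= Q (ratpt R q).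
have ratmax : forall i, exists q, maxi q /\ 0 < ratpt R q 0 i.
  move=> i; have [p [p1 p2 p3]] := descent i (leqnn _) xS.
  exists (cq p.1 p.2); split; last exact: p3 xmax (xp i).
  by split => // y ys; exact: le_trans (xmax y ys) p2.
have mid : forall q1 q2, maxi q1 -> maxi q2 -> maxi (q1 + 2^-1 *: (q2 - q1)) /\
    forall j, 0 < ratpt R q1 0 j \/ 0 < ratpt R q2 0 j -> 0 < ratpt R (q1 + 2^-1 *: (q2 - q1)) 0 j.
  move=> q1 q2 [[a1 a2] m1] [[b1 b2] m2]; rewrite /maxi ratpt_mid.
  set a := ratpt R q1 in a1 a2 m1 *; set b := ratpt R q2 in b1 b2 m2 *.
  have ms : in_simplex (a + 2^-1 *: (b - a)).
    split; first by rewrite sum_exp sumB a1 b1 subrr mulr0 addr0.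
    move=> j; rewrite entDZ entB; have := a2 j; have := b2 j; lra.
  split.
    split => // y ys; apply: le_trans (m1 y ys) _.
    have hb : Q b = Q a + 2 * 1 * bf a (b - a) + 1 ^+ 2 * Q (b - a).
      by rewrite -Q_exp scale1r addrC subrK.
    have hab := m1 _ (conj b1 b2); have hba := m2 _ (conj a1 a2).
    have hu : Q (b - a) <= 0 by apply: conc; rewrite sumB a1 b1 subrr.
    rewrite Q_exp; rewrite expr1n mulr1 mul1r in hb.
    have -> : (2^-1 : R) ^+ 2 = 4^-1 by rewrite expr2 -invfM; congr (_^-1); rewrite -natrM.
    lra.
  move=> j hj; rewrite entDZ entB; have := a2 j; have := b2 j; case: hj => hj; lra.
have ind : forall m, (m <= n)%N -> exists q, maxi q /\ forall j : 'I_n, (j < m)%N -> 0 < ratpt R q 0 j.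
  elim => [_|m IH hm].
    by have [q [hq _]] := ratmax ord0; exists q; split.
  have [q [hq hpos]] := IH (ltnW hm).
  have [q' [hq' hpos']] := ratmax (Ordinal hm).
  have [hmid hmpos] := mid q q' hq hq'.
  exists (q + 2^-1 *: (q' - q)); split => // j hj; apply: hmpos.
  rewrite ltnS leq_eqVlt in hj; case/orP: hj => hj.
    by right; have -> : j = Ordinal hm by apply: val_inj; exact/eqP.
  by left; exact: hpos.
have [q [[q1 q2] q3]] := ind n (leqnn _).
exists q; split; first by case: q1 => s1 _; split => // j; exact: q3.
by move=> y ys; rewrite Qle_qf; exact: q2.
Qed.

End Main.

Lemma qfN (R : realType) (d : nat) (A : 'M[rat]_(d.+1)) (x : 'rV[R]_(d.+1)) :
  qf (- A) x = - qf A x.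
Proof. by rewrite /qf map_mxN mulmxN mulNmx mxE mulrN. Qed.

Theorem lemma3p1 (R : realType) (d : nat) (A : 'M[rat]_(d.+1)) (hA : A^T = A) :
  (* (a) maximum and minimum attained at rational points *)
  ((exists q : 'rV[rat]_(d.+1), in_simplex (ratpt R q) /\
      forall y : 'rV[R]_(d.+1), in_simplex y -> qf A y <= qf A (ratpt R q)) /\
   (exists q : 'rV[rat]_(d.+1), in_simplex (ratpt R q) /\
      forall y : 'rV[R]_(d.+1), in_simplex y -> qf A (ratpt R q) <= qf A y)) /\
  (* (b) interior maximizer / minimizer can be chosen rational *)
  (((exists x : 'rV[R]_(d.+1), in_simplex_int x /\
       forall y, in_simplex y -> qf A y <= qf A x) ->
    exists q : 'rV[rat]_(d.+1), in_simplex_int (ratpt R q) /\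
       forall y, in_simplex y -> qf A y <= qf A (ratpt R q)) /\
   ((exists x : 'rV[R]_(d.+1), in_simplex_int x /\
       forall y, in_simplex y -> qf A x <= qf A y) ->
    exists q : 'rV[rat]_(d.+1), in_simplex_int (ratpt R q) /\
       forall y, in_simplex y -> qf A (ratpt R q) <= qf A y)).
Proof.
have hN : (- A)^T = - A by rewrite linearN /= hA.
split; split.
- exact: partA.
- have [q [q1 q2]] := @partA R d (- A) hN; exists q; split => // y ys.
  by have := q2 y ys; rewrite !qfN lerN2.
- exact: partB.
- move=> [x [xs xmin]].
  have [|q [q1 q2]] := @partB R d (- A) hN.
    by exists x; split => // y ys; rewrite !qfN lerN2; exact: xmin.
  by exists q; split => // y ys; have := q2 y ys; rewrite !qfN lerN2.
Qed.
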